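(* Let $B$ be a supersoluble brace, and let $I$ be an ideal of $B$ which is centrally nilpotent (as a brace). Then $I$ is $B$-centrally nilpotent.
   Context: A brace (skew left brace) is a set $B$ with two binary operations $+$ and $\cdot$ such that $(B,+)$ and $(B,\cdot)$ are groups and $a(b+c)=ab-a+ac$ for all $a,b,c\in B$. $\lambda_a(b)=-a+ab$ defines a homomorphism $\lambda\colon(B,\cdot)\to\operatorname{Aut}(B,+)$. An ideal is a subset that is a subgroup of both groups, normal in both, and invariant under all $\lambda_b$; quotients by ideals are braces, and an ideal is itself a brace. $\operatorname{Soc}(B)=\operatorname{Ker}\lambda\cap Z(B,+)$ and $\zeta(B)=\operatorname{Soc}(B)\cap Z(B,\cdot)$ (both ideals). The upper central series is $\zeta_0(B)=\{0\}$, $\zeta_{k+1}(B)/\zeta_k(B)=\zeta(B/\zeta_k(B))$; $B$ is centrally nilpotent if $B=\zeta_m(B)$ for some $m$. An ideal $I$ of $B$ is $B$-centrally nilpotent if there is a finite chain $\{0\}=I_0\le\dots\le I_n=I$ of ideals of $B$ with $I_{i+1}/I_i\le\zeta(I/I_i)$ for all $i$. $B$ is supersoluble if there is a finite chain of ideals $\{0\}=J_0\le\dots\le J_n=B$ such that for each $i$, either $(J_{i+1}/J_i,+)$ is infinite cyclic and $J_{i+1}/J_i\le\operatorname{Soc}(B/J_i)$, or $J_{i+1}/J_i$ has prime order. *)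

(* Defs.v *)
(* braces are possibly
   infinite, so they are given by an explicit carrier type and operations. *)
From mathcomp Require Import all_boot all_algebra.
Set Implicit Arguments. Unset Strict Implicit. Unset Printing Implicit Defensive.

Record brace (T : Type) := Brace {
  badd : T -> T -> T; bopp : T -> T; bzero : T;
  bmul : T -> T -> T; binv : T -> T; bone : T;
  baddA : forall a b c, badd a (badd b c) = badd (badd a b) c;
  badd0l : forall a, badd bzero a = a;
  badd0r : forall a, badd a bzero = a;
  baddNl : forall a, badd (bopp a) a = bzero;
  baddNr : forall a, badd a (bopp a) = bzero;
  bmulA : forall a b c, bmul a (bmul b c) = bmul (bmul a b) c;
  bmul1l : forall a, bmul bone a = a;
  bmul1r : forall a, bmul a bone = a;
  bmulVl : forall a, bmul (binv a) a = bone;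
  bmulVr : forall a, bmul a (binv a) = bone;
  brace_law : forall a b c,
    bmul a (badd b c) = badd (badd (bmul a b) (bopp a)) (bmul a c)
}.

Section BraceDefs.
Variables (T : Type) (B : brace T).

Local Notation "a + b" := (badd B a b).
Local Notation "- a" := (bopp B a).
Local Notation "a * b" := (bmul B a b).

Definition blambda (a b : T) : T := - a + a * b.

Definition is_ideal (I : T -> Prop) : Prop :=
  I (bzero B) /\
  (forall a b, I a -> I b -> I (a + b)) /\
  (forall a, I a -> I (- a)) /\
  I (bone B) /\
  (forall a b, I a -> I b -> I (a * b)) /\
  (forall a, I a -> I (binv B a)) /\
  (forall b a, I a -> I (b + a + - b)) /\
  (forall b a, I a -> I (b * a * binv B b)) /\
  (forall b a, I a -> I (blambda b a)).

(* congruence modulo a (normal) ideal J: x + J = y + J  (= xJ = yJ) *)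
Definition eqmod (J : T -> Prop) (x y : T) : Prop := J (- x + y).

(* x + J lies in Soc(S/J), for S a sub-brace containing the ideal J *)
Definition soc_in (S J : T -> Prop) (x : T) : Prop :=
  S x /\ forall b, S b ->
    eqmod J (blambda x b) b /\ eqmod J (x + b) (b + x).

(* x + J lies in zeta(S/J) = Soc(S/J) ∩ Z(S/J, .) *)
Definition zeta_in (S J : T -> Prop) (x : T) : Prop :=
  soc_in S J x /\ forall b, S b -> eqmod J (x * b) (b * x).

Fixpoint zeta_series (S : T -> Prop) (k : nat) : T -> Prop :=
  match k with
  | 0 => fun x => x = bzero B
  | k'.+1 => zeta_in S (zeta_series S k')
  end.

Definition centrally_nilpotent (S : T -> Prop) : Prop :=
  exists m, forall x, S x <-> zeta_series S m x.

Definition B_centrally_nilpotent (I : T -> Prop) : Prop :=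
  exists (n : nat) (Ic : nat -> T -> Prop),
    (forall x, Ic 0 x <-> x = bzero B) /\
    (forall x, Ic n x <-> I x) /\
    (forall i, i <= n -> is_ideal (Ic i)) /\
    (forall i, i < n -> forall x, Ic i x -> Ic i.+1 x) /\
    (forall i, i < n -> forall x, Ic i.+1 x -> zeta_in I (Ic i) x).

Definition bzmul (k : int) (g : T) : T :=
  match k with
  | Posz n => iter n (fun y => g + y) (bzero B)
  | Negz n => - iter n.+1 (fun y => g + y) (bzero B)
  end.

Definition quot_inf_cyclic (J2 J1 : T -> Prop) : Prop :=
  exists g, J2 g /\
    (forall x, J2 x -> exists k : int, eqmod J1 x (bzmul k g)) /\
    (forall k l : int, eqmod J1 (bzmul k g) (bzmul l g) -> k = l).

Definition quot_prime_order (J2 J1 : T -> Prop) : Prop :=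
  exists p : nat, prime p /\ exists f : 'I_p -> T,
    (forall j, J2 (f j)) /\
    (forall j j', eqmod J1 (f j) (f j') -> j = j') /\
    (forall x, J2 x -> exists j, eqmod J1 x (f j)).

Definition supersoluble : Prop :=
  exists (n : nat) (J : nat -> T -> Prop),
    (forall x, J 0 x <-> x = bzero B) /\
    (forall x, J n x) /\
    (forall i, i <= n -> is_ideal (J i)) /\
    (forall i, i < n -> forall x, J i x -> J i.+1 x) /\
    (forall i, i < n ->
       (quot_inf_cyclic (J i.+1) (J i) /\
        forall x, J i.+1 x -> soc_in (fun _ => True) (J i) x)
       \/ quot_prime_order (J i.+1) (J i)).

End BraceDefs.

(* Main.v *)
Require Import Defs.
From mathcomp Require Import all_boot all_algebra zify.
From Stdlib Require Import Setoid Morphisms IndefiniteDescription ClassicalEpsilon Classical.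
Set Implicit Arguments. Unset Strict Implicit. Unset Printing Implicit Defensive.

Section Alg.
Variables (T : Type) (B : brace T).
Local Notation "a ⊕ b" := (badd B a b) (at level 50, left associativity).
Local Notation "⊖ a" := (bopp B a) (at level 35, right associativity).
Local Notation "a ⊗ b" := (bmul B a b) (at level 40, left associativity).
Local Notation z := (bzero B).
Local Notation inv := (binv B).
Local Notation lam := (blambda B).

Lemma addA a b c : a ⊕ (b ⊕ c) = a ⊕ b ⊕ c. Proof. exact: baddA. Qed.
Lemma add0 a : z ⊕ a = a. Proof. exact: badd0l. Qed.
Lemma addz a : a ⊕ z = a. Proof. exact: badd0r. Qed.
Lemma addNa a : ⊖ a ⊕ a = z. Proof. exact: baddNl. Qed.
Lemma addaN a : a ⊕ ⊖ a = z. Proof. exact: baddNr. Qed.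
Lemma addKl a b : ⊖ a ⊕ (a ⊕ b) = b. Proof. by rewrite addA addNa add0. Qed.
Lemma addNKl a b : a ⊕ (⊖ a ⊕ b) = b. Proof. by rewrite addA addaN add0. Qed.
Lemma addKr a b : a ⊕ b ⊕ ⊖ b = a. Proof. by rewrite -addA addaN addz. Qed.
Lemma addNKr a b : a ⊕ ⊖ b ⊕ b = a. Proof. by rewrite -addA addNa addz. Qed.
Lemma addIl a b c : a ⊕ b = a ⊕ c -> b = c.
Proof. by move=> h; rewrite -(addKl a b) h addKl. Qed.
Lemma addIr a b c : b ⊕ a = c ⊕ a -> b = c.
Proof. by move=> h; rewrite -(addKr b a) h addKr. Qed.
Lemma opp_uniq a b : a ⊕ b = z -> b = ⊖ a.
Proof. by move=> h; apply: (addIl (a:=a)); rewrite h addaN. Qed.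
Lemma oppK a : ⊖ ⊖ a = a.
Proof. by symmetry; apply: opp_uniq; rewrite addNa. Qed.
Lemma opp0 : ⊖ z = z.
Proof. by symmetry; apply: opp_uniq; rewrite addz. Qed.
Lemma oppD a b : ⊖ (a ⊕ b) = ⊖ b ⊕ ⊖ a.
Proof. by symmetry; apply: opp_uniq; rewrite addA addKr addaN. Qed.

Lemma mulA a b c : a ⊗ (b ⊗ c) = a ⊗ b ⊗ c. Proof. exact: bmulA. Qed.
Lemma mulVa a : inv a ⊗ a = bone B. Proof. exact: bmulVl. Qed.
Lemma mulaV a : a ⊗ inv a = bone B. Proof. exact: bmulVr. Qed.

Lemma mulz a : a ⊗ z = a.
Proof.
have h := brace_law B a z z; rewrite addz in h.
have h2 : z = ⊖ a ⊕ a ⊗ z.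
  by apply: (addIl (a := a ⊗ z)); rewrite addz addA -h.
by rewrite -(addNKl a (a ⊗ z)) -h2 addz.
Qed.
Lemma one_z : bone B = z.
Proof. by rewrite -(bmul1l B z) mulz. Qed.
Lemma mul0 a : z ⊗ a = a. Proof. by rewrite -one_z bmul1l. Qed.
Lemma mul0r a : a ⊗ z = a. Proof. exact: mulz. Qed.
Lemma mulVa0 a : inv a ⊗ a = z. Proof. by rewrite mulVa one_z. Qed.
Lemma mulaV0 a : a ⊗ inv a = z. Proof. by rewrite mulaV one_z. Qed.
Lemma mulKl a b : inv a ⊗ (a ⊗ b) = b. Proof. by rewrite mulA mulVa0 mul0. Qed.
Lemma mulVKl a b : a ⊗ (inv a ⊗ b) = b. Proof. by rewrite mulA mulaV0 mul0. Qed.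
Lemma mulKr a b : a ⊗ b ⊗ inv b = a. Proof. by rewrite -mulA mulaV0 mulz. Qed.
Lemma mulVKr a b : a ⊗ inv b ⊗ b = a. Proof. by rewrite -mulA mulVa0 mulz. Qed.
Lemma mulIl a b c : a ⊗ b = a ⊗ c -> b = c.
Proof. by move=> h; rewrite -(mulKl a b) h mulKl. Qed.
Lemma inv_uniq a b : a ⊗ b = z -> b = inv a.
Proof. by move=> h; apply: (mulIl (a:=a)); rewrite h mulaV0. Qed.
Lemma invK a : inv (inv a) = a.
Proof. by symmetry; apply: inv_uniq; rewrite mulVa0. Qed.
Lemma invM a b : inv (a ⊗ b) = inv b ⊗ inv a.
Proof. by symmetry; apply: inv_uniq; rewrite mulA mulKr mulaV0. Qed.

Lemma law a b c : a ⊗ (b ⊕ c) = a ⊗ b ⊕ ⊖ a ⊕ a ⊗ c. Proof. exact: brace_law. Qed.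
Lemma lamE a b : lam a b = ⊖ a ⊕ a ⊗ b. Proof. by []. Qed.
Lemma mul_lam a b : a ⊗ b = a ⊕ lam a b. Proof. by rewrite lamE addNKl. Qed.
Lemma lamD a b c : lam a (b ⊕ c) = lam a b ⊕ lam a c.
Proof. by rewrite !lamE law !addA. Qed.
Lemma lam0 a : lam a z = z. Proof. by rewrite lamE mulz addNa. Qed.
Lemma lamN a b : lam a (⊖ b) = ⊖ lam a b.
Proof. by apply: opp_uniq; rewrite -lamD addaN lam0. Qed.
Lemma mulN a b : a ⊗ (⊖ b) = a ⊕ ⊖ (a ⊗ b) ⊕ a.
Proof.
have h := law a b (⊖ b); rewrite addaN mulz in h.
apply: (addIl (a := a ⊗ b ⊕ ⊖ a)); rewrite -h.
by rewrite !addA addNKr addaN add0.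
Qed.
Lemma lamM a b c : lam (a ⊗ b) c = lam a (lam b c).
Proof.
by rewrite !lamE law mulN mulA !addA addNa add0 addKr.
Qed.
Lemma lam_z b : lam z b = b. Proof. by rewrite lamE mul0 opp0 add0. Qed.
Lemma lamV a b : lam a (lam (inv a) b) = b.
Proof. by rewrite -lamM mulaV0 lam_z. Qed.
Lemma lamVr a b : lam (inv a) (lam a b) = b.
Proof. by rewrite -lamM mulVa0 lam_z. Qed.
End Alg.


Section Ideal.
Variables (T : Type) (B : brace T).
Local Notation "a ⊕ b" := (badd B a b) (at level 50, left associativity).
Local Notation "⊖ a" := (bopp B a) (at level 35, right associativity).
Local Notation "a ⊗ b" := (bmul B a b) (at level 40, left associativity).
Local Notation z := (bzero B).
Local Notation inv := (binv B).
Local Notation lam := (blambda B).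
Variable J : T -> Prop.
Hypothesis hJ : is_ideal B J.

Lemma id0 : J z. Proof. by case: hJ. Qed.
Lemma idD a b : J a -> J b -> J (a ⊕ b). Proof. by case: hJ => [?[H ?]]; apply: H. Qed.
Lemma idN a : J a -> J (⊖ a). Proof. by case: hJ => [?[?[H ?]]]; apply: H. Qed.
Lemma idM a b : J a -> J b -> J (a ⊗ b). Proof. by case: hJ => [?[?[?[?[H ?]]]]]; apply: H. Qed.
Lemma idV a : J a -> J (inv a). Proof. by case: hJ => [?[?[?[?[?[H ?]]]]]]; apply: H. Qed.
Lemma idCa b a : J a -> J (b ⊕ a ⊕ ⊖ b). Proof. by case: hJ => [?[?[?[?[?[?[H ?]]]]]]]; apply: H. Qed.
Lemma idCm b a : J a -> J (b ⊗ a ⊗ inv b). Proof. by case: hJ => [?[?[?[?[?[?[?[H ?]]]]]]]]; apply: H. Qed.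
Lemma idL b a : J a -> J (lam b a). Proof. by case: hJ => [?[?[?[?[?[?[?[? H]]]]]]]]; apply: H. Qed.

Local Notation em := (eqmod B J).

Lemma em_refl u : em u u. Proof. by rewrite /eqmod addNa; apply: id0. Qed.
Lemma em_sym u v : em u v -> em v u.
Proof. by rewrite /eqmod => /idN; rewrite oppD oppK. Qed.
Lemma em_trans u v w : em u v -> em v w -> em u w.
Proof. by rewrite /eqmod => h1 h2; have := idD h1 h2; rewrite -addA addNKl. Qed.
Lemma em_add u u' v v' : em u u' -> em v v' -> em (u ⊕ v) (u' ⊕ v').
Proof.
rewrite /eqmod => h1 h2.
have -> : ⊖ (u ⊕ v) ⊕ (u' ⊕ v') = (⊖ v ⊕ (⊖ u ⊕ u') ⊕ ⊖ ⊖ v) ⊕ (⊖ v ⊕ v').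
  by rewrite oppK oppD !addA addKr.
by apply: idD => //; apply: idCa.
Qed.
Lemma em_opp u u' : em u u' -> em (⊖ u) (⊖ u').
Proof.
rewrite /eqmod => h.
have -> : ⊖ ⊖ u ⊕ ⊖ u' = u ⊕ ⊖ (⊖ u ⊕ u') ⊕ ⊖ u.
  by rewrite oppK oppD oppK !addA addKr.
by apply: idCa; apply: idN.
Qed.
Lemma em_mulE u v : em u v <-> J (inv u ⊗ v).
Proof.
rewrite /eqmod; split => h.
  have -> : inv u ⊗ v = lam (inv u) (⊖ u ⊕ v).
    by rewrite lamE law mulN mulVa0 opp0 !addA addNa !add0 addaN add0.
  exact: idL.
have -> : ⊖ u ⊕ v = lam u (inv u ⊗ v) by rewrite lamE mulVKl.
exact: idL.
Qed.
Lemma em_mul u u' v v' : em u u' -> em v v' -> em (u ⊗ v) (u' ⊗ v').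
Proof.
rewrite !em_mulE => h1 h2.
have -> : inv (u ⊗ v) ⊗ (u' ⊗ v') = (inv v ⊗ (inv u ⊗ u') ⊗ inv (inv v)) ⊗ (inv v ⊗ v').
  by rewrite invK invM !mulA mulKr.
by apply: idM => //; apply: idCm.
Qed.
Lemma em_inv u u' : em u u' -> em (inv u) (inv u').
Proof.
rewrite !em_mulE => h.
have -> : inv (inv u) ⊗ inv u' = u ⊗ inv (inv u ⊗ u') ⊗ inv u.
  by rewrite invK invM invK !mulA mulKr.
by apply: idCm; apply: idV.
Qed.
Lemma em_lam u u' v v' : em u u' -> em v v' -> em (lam u v) (lam u' v').
Proof. by move=> h1 h2; rewrite !lamE; apply: em_add; [apply: em_opp|apply: em_mul]. Qed.
Lemma em_0 u : J u -> em u z.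
Proof. by rewrite /eqmod addz => /idN; rewrite /=. Qed.
Lemma em_0' u : J u -> em z u.
Proof. by rewrite /eqmod opp0 add0. Qed.

Lemma em_setoid : Equivalence em.
Proof. split; [exact: em_refl | exact: em_sym | exact: em_trans]. Qed.
Lemma em_add_p : Proper (em ==> em ==> em) (badd B).
Proof. by move=> ? ? ? ? ? ?; apply: em_add. Qed.
Lemma em_opp_p : Proper (em ==> em) (bopp B).
Proof. by move=> ? ? ?; apply: em_opp. Qed.
Lemma em_mul_p : Proper (em ==> em ==> em) (bmul B).
Proof. by move=> ? ? ? ? ? ?; apply: em_mul. Qed.
Lemma em_inv_p : Proper (em ==> em) (binv B).
Proof. by move=> ? ? ?; apply: em_inv. Qed.
Lemma em_lam_p : Proper (em ==> em ==> em) (blambda B).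
Proof. by move=> ? ? ? ? ? ?; apply: em_lam. Qed.
End Ideal.

Lemma test T (B : brace T) J (hJ : is_ideal B J) x b :
  J x -> eqmod B J (blambda B x b) b.
Proof.
move=> Jx.
have E := em_setoid hJ. have A := em_add_p hJ. have O := em_opp_p hJ.
have M := em_mul_p hJ. have L := em_lam_p hJ.
have -> : eqmod B J x (bzero B) by exact: em_0.
rewrite lam_z; reflexivity. Qed.



Section Zmul.
Variables (T : Type) (B : brace T).
Local Notation "a ⊕ b" := (badd B a b) (at level 50, left associativity).
Local Notation "⊖ a" := (bopp B a) (at level 35, right associativity).
Local Notation z := (bzero B).
Local Notation zm := (bzmul B).

Definition itN (n : nat) (g : T) := iter n (fun y => g ⊕ y) z.

Lemma itN_comm n g : g ⊕ itN n g = itN n g ⊕ g.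
Proof.
elim: n => [|n IH].
  by rewrite /itN /= addz add0.
rewrite /itN /= -/(itN n g). by rewrite -addA -IH.
Qed.

Lemma zmP n g : zm (Posz n) g = itN n g. Proof. by []. Qed.
Lemma zmN n g : zm (Negz n) g = ⊖ itN n.+1 g. Proof. by []. Qed.
Lemma zm0 g : zm 0 g = z. Proof. by []. Qed.
Lemma zm1 g : zm 1 g = g. Proof. by rewrite /= addz. Qed.

Lemma zmS (k : int) g : zm (k + 1) g = zm k g ⊕ g.
Proof.
case: k => n.
  have -> : (Posz n + 1 = Posz n.+1)%R by lia.
  by rewrite !zmP /itN /= -/(itN n g) itN_comm.
case: n => [|n].
  have -> : (Negz 0 + 1 = 0)%R by lia.
  by rewrite zm0 zmN /itN /= addz addNa.
have -> : (Negz n.+1 + 1 = Negz n)%R by lia.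
rewrite !zmN.
have -> : itN n.+2 g = g ⊕ itN n.+1 g by [].
by rewrite oppD addNKr.
Qed.

Lemma zmSN (k : int) g : zm (k - 1) g = zm k g ⊕ ⊖ g.
Proof.
have := zmS (k - 1) g; have -> : (k - 1 + 1 = k)%R by lia.
by move=> ->; rewrite addKr.
Qed.

Lemma zmD (k l : int) g : zm (k + l) g = zm k g ⊕ zm l g.
Proof.
case: l => n.
  elim: n => [|n IH]; first by rewrite GRing.addr0 zm0 addz.
  have -> : (k + Posz n.+1 = (k + Posz n) + 1)%R by lia.
  have -> : (Posz n.+1 = Posz n + 1)%R by lia.
  by rewrite !zmS IH addA.
elim: n => [|n IH].
  have -> : (k + Negz 0 = k - 1)%R by lia.
  by rewrite zmSN zmN /itN /= addz.
have -> : (k + Negz n.+1 = (k + Negz n) - 1)%R by lia.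
have -> : (Negz n.+1 = Negz n - 1)%R by lia.
by rewrite !zmSN IH addA.
Qed.

Lemma zm_uniq (F : int -> T) :
  (forall k l, F (k + l)%R = F k ⊕ F l) -> forall k, F k = zm k (F 1%R).
Proof.
move=> FD.
have F0 : F 0%R = z.
  by apply: (addIl (B:=B) (a := F 0%R)); rewrite -FD GRing.addr0 addz.
have FP : forall n, F (Posz n) = itN n (F 1%R).
  elim=> [|n IH]; first by rewrite F0.
  have -> : (Posz n.+1 = Posz n + 1)%R by lia.
  by rewrite FD IH /itN /= -/(itN n _) itN_comm.
case=> n; first exact: FP.
rewrite zmN -FP; apply: opp_uniq; rewrite -FD.
by have -> : (Posz n.+1 + Negz n = 0)%R by lia.
Qed.

Lemma zmM (k e : int) g : zm k (zm e g) = zm (k * e) g.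
Proof.
have := @zm_uniq (fun k => zm (k * e) g).
rewrite GRing.mul1r => -> //.
by move=> a b; rewrite GRing.mulrDl zmD.
Qed.

Lemma zm_hom (f : T -> T) (k : int) g :
  (forall a b, f (a ⊕ b) = f a ⊕ f b) -> f (zm k g) = zm k (f g).
Proof.
move=> fD; have := @zm_uniq (fun k => f (zm k g)).
rewrite zm1 => -> //.
by move=> a b; rewrite zmD fD.
Qed.

Lemma zm_em (J : T -> Prop) (hJ : is_ideal B J) (k : int) u v :
  eqmod B J u v -> eqmod B J (zm k u) (zm k v).
Proof.
have E := em_setoid hJ. have A := em_add_p hJ. have O := em_opp_p hJ.
move=> h.
have HP : forall n, eqmod B J (itN n u) (itN n v).
  elim=> [|n IH]; first by reflexivity.
  exact: (em_add hJ h IH).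
case: k => n; first exact: HP.
by rewrite !zmN; apply: em_opp.
Qed.
End Zmul.


Definition pb (P : Prop) : bool := if excluded_middle_informative P then true else false.
Lemma pbP P : reflect P (pb P).
Proof. by rewrite /pb; case: excluded_middle_informative => h; constructor. Qed.

Section Lag.
Variables (T : Type) (B : brace T).
Local Notation "a ⊕ b" := (badd B a b) (at level 50, left associativity).
Local Notation "⊖ a" := (bopp B a) (at level 35, right associativity).
Local Notation z := (bzero B).

Lemma lagrange (Ji Jn H : T -> Prop) (hJi : is_ideal B Ji) (hJn : is_ideal B Jn)
  (p : nat) (pp : prime p) (f : 'I_p -> T)
  (fJ : forall j, Jn (f j))
  (finj : forall j j', eqmod B Ji (f j) (f j') -> j = j')
  (fsurj : forall x, Jn x -> exists j, eqmod B Ji x (f j))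
  (HD : forall a b, H a -> H b -> H (a ⊕ b))
  (HN : forall a, H a -> H (⊖ a))
  (HJ : forall a, Ji a -> H a)
  (y : T) (Hy : H y) (Jny : Jn y) (nJy : ~ Ji y) :
  forall x, Jn x -> H x.
Proof.
have E := em_setoid hJi. have Ad := em_add_p hJi. have O := em_opp_p hJi.
have Hem : forall u v, H u -> eqmod B Ji u v -> H v.
  by move=> u v Hu Huv; rewrite -(addNKl B u v); apply: HD => //; apply: HJ.
have [idx idxP] : exists idx : T -> 'I_p, forall x, Jn x -> eqmod B Ji x (f (idx x)).
  apply: (functional_choice (fun x j => Jn x -> eqmod B Ji x (f j))) => x.
  case: (classic (Jn x)) => [/fsurj [j hj]|nx]; first by exists j.
  by exists (Ordinal (prime_gt0 pp)).
have idxf : forall j, idx (f j) = j.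
  by move=> j; symmetry; apply: finj; apply: idxP.
pose A := [set j | pb (H (f j))].
have inA : forall j, (j \in A) = pb (H (f j)) by move=> j; rewrite inE.
pose R := fun j j' => pb (H (⊖ f j ⊕ f j')).
have eqR : {in [set: 'I_p] & &, equivalence_rel R}.
  move=> a b c _ _ _; rewrite /R; split.
    by apply/pbP; rewrite addNa; apply: HJ; apply: id0 hJi.
  move=> /pbP hab; apply/pbP/pbP => h.
    by have := HD _ _ (HN _ hab) h; rewrite oppD oppK !addA addKr.
  by have := HD _ _ hab h; rewrite !addA addKr.
have Hpart := equivalence_partitionP eqR.
have Hc := card_partition Hpart.
have cardC : forall C, C \in equivalence_partition R [set: 'I_p] -> #|C| = #|A|.
  move=> C /imsetP [x _ ->].
  pose g := fun a => idx (f x ⊕ f a).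
  have -> : [set y in [set: 'I_p] | R x y] = g @: A.
    apply/setP => j'; rewrite !inE /=; apply/idP/idP.
      move=> /pbP hR; apply/imsetP.
      have Jw : Jn (⊖ f x ⊕ f j') by apply: (idD hJn (idN hJn (fJ x)) (fJ j')).
      set a := idx (⊖ f x ⊕ f j').
      have h1 : eqmod B Ji (⊖ f x ⊕ f j') (f a) := idxP _ Jw.
      exists a; first by rewrite inA; apply/pbP; apply: Hem hR _.
      have h2 := idxP _ (idD hJn (fJ x) (fJ a)).
      move: h2; set w := f (idx _) => h2.
      rewrite /g; apply: finj; rewrite -/w.
      by rewrite -h2 -h1 addA addaN add0; reflexivity.
    move=> /imsetP [a]; rewrite inA => /pbP Ha ->; apply/pbP.
    rewrite /g; apply: Hem Ha _.
    have h2 := idxP _ (idD hJn (fJ x) (fJ a)).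
    move: h2; set w := f (idx _) => h2.
    by rewrite -h2 addA addNa add0; reflexivity.
  apply: card_in_imset => a b _ _ /= hab.
  apply: finj.
  have h1 := idxP (f x ⊕ f a) (idD hJn (fJ x) (fJ a)).
  have h2 := idxP (f x ⊕ f b) (idD hJn (fJ x) (fJ b)).
  rewrite /g in hab; rewrite hab in h1.
  have h3 : eqmod B Ji (f x ⊕ f a) (f x ⊕ f b) := em_trans hJi h1 (em_sym hJi h2).
  have h4 := em_add hJi (em_refl hJi (⊖ f x)) h3.
  by rewrite !addA !addNa !add0 in h4.
rewrite cardsT card_ord (eq_bigr (fun _ => #|A|) cardC) sum_nat_const in Hc.
have dA : #|A| %| p by apply/dvdnP; exists #|equivalence_partition R [set: 'I_p]|.
have j0A : idx z \in A.
  by rewrite inA; apply/pbP; apply: Hem (HJ _ (id0 hJi)) _; apply: idxP; apply: id0 hJn.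
have j1A : idx y \in A.
  by rewrite inA; apply/pbP; apply: Hem Hy _; apply: idxP.
have ne : idx z != idx y.
  apply/eqP => e; apply: nJy.
  have h1 := idxP _ (id0 hJn). have h2 := idxP _ Jny.
  rewrite e in h1.
  have : eqmod B Ji z y := em_trans hJi h1 (em_sym hJi h2).
  by rewrite /eqmod opp0 add0.
have cA : 1 < #|A|.
  have := subset_leq_card (A := [set idx z; idx y]) (B := A).
  rewrite cards2 ne; apply; apply/subsetP => j.
  by rewrite in_set2 => /orP [] /eqP ->.
have eA : #|A| = p.
  by apply/(prime_nt_dvdP pp) => //; rewrite neq_ltn cA orbT.
have AT : A = [set: 'I_p].
  by apply/eqP; rewrite eqEcard subsetT cardsT card_ord eA leqnn.
move=> x Jx.
have : idx x \in A by rewrite AT inE.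
rewrite inA => /pbP h; apply: Hem h _.
by symmetry; apply: idxP.
Qed.
End Lag.


Section Main.
Variables (T : Type) (B : brace T).
Local Notation "a ⊕ b" := (badd B a b) (at level 50, left associativity).
Local Notation "⊖ a" := (bopp B a) (at level 35, right associativity).
Local Notation "a ⊗ b" := (bmul B a b) (at level 40, left associativity).
Local Notation z := (bzero B).
Local Notation inv := (binv B).
Local Notation lam := (blambda B).

Lemma ideal_cap (J1 J2 : T -> Prop) : is_ideal B J1 -> is_ideal B J2 ->
  is_ideal B (fun x => J1 x /\ J2 x).
Proof.
move=> h1 h2.
split; first by split; apply: id0.
split; first by move=> a b [? ?] [? ?]; split; apply: idD.
split; first by move=> a [? ?]; split; apply: idN.
split; first by rewrite one_z; split; apply: id0.
split; first by move=> a b [? ?] [? ?]; split; apply: idM.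
split; first by move=> a [? ?]; split; apply: idV.
split; first by move=> b a [? ?]; split; apply: idCa.
split; first by move=> b a [? ?]; split; apply: idCm.
by move=> b a [? ?]; split; apply: idL.
Qed.

Variables (I Ji Jn : T -> Prop).
Hypotheses (hI : is_ideal B I) (hJi : is_ideal B Ji) (hJn : is_ideal B Jn).
Hypothesis JiJn : forall x, Ji x -> Jn x.
Variable m : nat.
Hypothesis hZ : forall x, I x <-> zeta_series B I m x.

Local Notation Z := (zeta_series B I).

Definition cen (x : T) := forall b, I b ->
  eqmod B Ji (x ⊕ b) (b ⊕ x) /\ eqmod B Ji (x ⊗ b) (x ⊕ b) /\ eqmod B Ji (b ⊗ x) (b ⊕ x).

Lemma Z_I j y : Z j y -> I y.
Proof. by case: j => [/= ->|j [[]]]; [apply: id0|]. Qed.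

Lemma cen_zeta x : I x -> cen x -> zeta_in B I (fun y => Ji y /\ I y) x.
Proof.
move=> Ix cx.
have E := em_setoid hJi. have A := em_add_p hJi. have O := em_opp_p hJi.
have M := em_mul_p hJi.
have K : forall u v, I u -> I v -> eqmod B Ji u v -> eqmod B (fun y => Ji y /\ I y) u v.
  move=> u v Iu Iv h; split; [exact: h | ]. exact: (idD hI (idN hI Iu) Iv).
split; first split => //.
  move=> b Ib; have [c1 [c2 c3]] := cx b Ib; split; apply: K.
  - by apply: (idL hI).
  - done.
  - by rewrite lamE c2 addKl; reflexivity.
  - by apply: (idD hI).
  - by apply: (idD hI).
  - done.
move=> b Ib; have [c1 [c2 c3]] := cx b Ib; apply: K.
- by apply: (idM hI).
- by apply: (idM hI).
by rewrite c2 c1 c3; reflexivity.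
Qed.

Lemma cen_resp u v : eqmod B Ji u v -> cen u -> cen v.
Proof.
have E := em_setoid hJi. have A := em_add_p hJi.
have M := em_mul_p hJi.
by move=> h cu b Ib; rewrite -h; apply: cu.
Qed.

Lemma cen0 : cen z.
Proof.
have E := em_setoid hJi.
by move=> b Ib; rewrite mul0 mulz add0 addz; split; [|split]; reflexivity.
Qed.

Lemma cen_Ji x : Ji x -> cen x.
Proof. by move=> h; apply: (cen_resp (u := z)); [apply: em_0' | apply: cen0]. Qed.

Lemma cenD u1 u2 : I u1 -> I u2 -> cen u1 -> cen u2 -> cen (u1 ⊕ u2).
Proof.
have E := em_setoid hJi. have A := em_add_p hJi. have O := em_opp_p hJi.
have M := em_mul_p hJi.
move=> I1 I2 c1 c2 b Ib.
have [a1 [a2 a3]] := c1 b Ib. have [d1 [d2 d3]] := c2 b Ib.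
have [_ [e12 _]] := c1 u2 I2.
split; [|split].
- by rewrite -addA d1 addA a1 -addA; reflexivity.
- transitivity ((u1 ⊗ u2) ⊗ b); first by rewrite e12; reflexivity.
  rewrite -mulA.
  have [_ [f2 _]] := c1 (u2 ⊗ b) (idM hI I2 Ib).
  by rewrite f2 d2 addA; reflexivity.
- transitivity (b ⊗ (u1 ⊗ u2)); first by rewrite e12; reflexivity.
  rewrite mulA.
  have [_ [_ f3]] := c2 (b ⊗ u1) (idM hI Ib I1).
  by rewrite f3 a3 addA; reflexivity.
Qed.

Lemma cenN u : I u -> cen u -> cen (⊖ u).
Proof.
have E := em_setoid hJi. have A := em_add_p hJi. have O := em_opp_p hJi.
have M := em_mul_p hJi.
move=> Iu cu.
have [_ [hv _]] := cu (inv u) (idV hI Iu).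
rewrite mulaV0 in hv.
have ei : eqmod B Ji (⊖ u) (inv u).
  by rewrite -(addz B (⊖ u)) hv addKl; reflexivity.
move=> b Ib; have [a1 [a2 a3]] := cu b Ib.
split; [|split].
- have -> : ⊖ u ⊕ b = ⊖ u ⊕ (b ⊕ u) ⊕ ⊖ u by rewrite addA addKr.
  by rewrite -a1 addKl; reflexivity.
- have [_ [f2 _]] := cu (inv u ⊗ b) (idM hI (idV hI Iu) Ib).
  rewrite mulVKl in f2.
  transitivity (inv u ⊗ b); first by rewrite ei; reflexivity.
  have := em_add hJi (em_refl hJi (⊖ u)) f2; rewrite addKl => g2.
  by symmetry.
- have [_ [_ f3]] := cu (b ⊗ inv u) (idM hI Ib (idV hI Iu)).
  rewrite mulVKr in f3.
  transitivity (b ⊗ inv u); first by rewrite ei; reflexivity.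
  have := em_add hJi f3 (em_refl hJi (⊖ u)); rewrite addKr => g3.
  by symmetry.
Qed.

Lemma Jn_defects y b : Jn y ->
  eqmod B Jn (lam y b) b /\ eqmod B Jn (y ⊕ b) (b ⊕ y) /\ eqmod B Jn (y ⊗ b) (b ⊗ y).
Proof.
have E := em_setoid hJn. have A := em_add_p hJn. have O := em_opp_p hJn.
have M := em_mul_p hJn. have L := em_lam_p hJn.
move=> Jy; have -> : eqmod B Jn y z by apply: em_0.
by rewrite lam_z addz add0 mulz mul0; split; [|split]; reflexivity.
Qed.

Lemma Z_step j y : Jn y -> Z j.+1 y ->
  (forall y', Jn y' -> Z j y' -> Ji y') -> cen y.
Proof.
have E := em_setoid hJi. have A := em_add_p hJi. have O := em_opp_p hJi.
have M := em_mul_p hJi.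
move=> Jy [[Iy hs] hm] hmin b Ib.
have [s1 s2] := hs b Ib. have m3 := hm b Ib.
have [t1 [t2 t3]] := Jn_defects b Jy.
have u1 : eqmod B Ji (lam y b) b by apply: hmin; [exact: t1|exact: s1].
have u2 : eqmod B Ji (y ⊕ b) (b ⊕ y) by apply: hmin; [exact: t2|exact: s2].
have u3 : eqmod B Ji (y ⊗ b) (b ⊗ y) by apply: hmin; [exact: t3|exact: m3].
have u4 : eqmod B Ji (y ⊗ b) (y ⊕ b) by rewrite mul_lam u1; reflexivity.
split; [done|split; first done].
by rewrite -u3 u4 u2; reflexivity.
Qed.

Lemma descent_prime : forall j y, Jn y -> Z j y -> ~ Ji y ->
  exists y', Jn y' /\ I y' /\ ~ Ji y' /\ cen y'.
Proof.
elim=> [|j IH] y Jy Zy nJy.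
  by move: Zy => /= Zy; case: nJy; rewrite Zy; apply: id0.
case: (classic (exists y', Jn y' /\ Z j y' /\ ~ Ji y')) => [[y' [? [? ?]]]|nex].
  by apply: (IH y').
exists y; split => //; split; first exact: (Z_I Zy).
split => //; apply: (Z_step Jy Zy) => y' Jy' Zy'.
by apply: NNPP => nJ; apply: nex; exists y'.
Qed.

Lemma key_prime : quot_prime_order B Jn Ji ->
  forall x, Jn x -> I x -> cen x.
Proof.
move=> [p [pp [f [fJ [finj fsurj]]]]].
case: (classic (exists x0, Jn x0 /\ I x0 /\ ~ Ji x0)) => [[x0 [J0 [I0 nJ0]]]|nex]; last first.
  move=> x Jx Ix; apply: cen_Ji; apply: NNPP => nJ; apply: nex; by exists x.
have [y [Jy [Iy [nJy cy]]]] := descent_prime J0 (proj1 (hZ x0) I0) nJ0.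
pose H := fun x => exists u, I u /\ eqmod B Ji x u /\ cen u.
have HJ : forall x, H x -> cen x.
  by move=> x [u [_ [h cu]]]; apply: (cen_resp (em_sym hJi h)).
have Hall : forall x, Jn x -> H x.
  have HD : forall a b, H a -> H b -> H (a ⊕ b).
    move=> a b [u1 [I1 [h1 c1]]] [u2 [I2 [h2 c2]]].
    exists (u1 ⊕ u2); split; first by apply: (idD hI).
    by split; [apply: em_add | apply: cenD].
  have HN : forall a, H a -> H (⊖ a).
    move=> a [u [Iu [h c]]]; exists (⊖ u); split; first by apply: (idN hI).
    by split; [apply: em_opp | apply: cenN].
  have HJ0 : forall a, Ji a -> H a.
    move=> a Ja; exists z; split; first by apply: (id0 hI).
    by split; [apply: em_0 | apply: cen0].
  have Hy : H y by exists y; split => //; split; [apply: em_refl|].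
  exact: (lagrange hJi hJn pp fJ finj fsurj HD HN HJ0 Hy Jy nJy).
by move=> x Jx _; apply: HJ; apply: Hall.
Qed.

Local Notation zm := (bzmul B).

Lemma zm_opp (k : int) g : zm (- k)%R g = ⊖ zm k g.
Proof.
apply: opp_uniq; rewrite -zmD.
by have -> : (k + - k = 0)%R by lia.
Qed.

Lemma key_inf : quot_inf_cyclic B Jn Ji ->
  (forall x, Jn x -> soc_in B (fun _ => True) Ji x) ->
  forall x, Jn x -> I x -> cen x.
Proof.
move=> [g [Jg [gsurj ginj]]] soc.
have E := em_setoid hJi. have A := em_add_p hJi. have O := em_opp_p hJi.
have M := em_mul_p hJi. have L := em_lam_p hJi.
have soc' : forall y b, Jn y -> eqmod B Ji (lam y b) b /\ eqmod B Ji (y ⊕ b) (b ⊕ y).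
  by move=> y b Jy; apply: (proj2 (soc y Jy) b Logic.I).
case: (classic (exists x0, Jn x0 /\ I x0 /\ ~ Ji x0)) => [[x0 [J0 [I0 nJ0]]]|nex]; last first.
  move=> x Jx Ix; apply: cen_Ji; apply: NNPP => nJ; apply: nex; by exists x.
have lamg : forall b, I b -> eqmod B Ji (lam b g) g.
  move=> b Ib.
  have [e he] := gsurj _ (idL hJn b Jg).
  pose c := (e - 1)%R.
  have desc : forall j y k, Jn y -> Z j y -> eqmod B Ji y (zm k g) -> (c ^+ j * k = 0)%R.
    elim=> [|j IH] y k Jy Zy hy.
      move: Zy => /= Zy; subst y.
      have := ginj 0%R k; rewrite zm0 => /(_ hy) <-.
      by rewrite GRing.mulr0.
    pose y' := ⊖ (y ⊗ b) ⊕ (b ⊗ y).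
    have Jy' : Jn y' by have [_ [_ t3]] := Jn_defects b Jy; exact: t3.
    have Zy' : Z j y' by move: Zy => [_ hm]; exact: (hm b Ib).
    have hy' : eqmod B Ji y' (zm (c * k)%R g).
      have [s1 s2] := soc' y b Jy.
      rewrite /y' (mul_lam _ y b) (mul_lam _ b y) s1 s2 oppD addA addNKr.
      rewrite hy (zm_hom _ _ (lamD B b)).
      have h1 := zm_em hJi k he; rewrite h1 zmM -zm_opp -zmD.
      have -> : (- k + k * e = c * k)%R by rewrite /c; nia.
      reflexivity.
    have := IH y' (c * k)%R Jy' Zy' hy'.
    by rewrite GRing.exprSr -GRing.mulrA.
  have [k0 hk0] := gsurj x0 J0.
  have := desc m x0 k0 J0 (proj1 (hZ x0) I0) hk0.
  move/eqP; rewrite GRing.mulf_eq0 GRing.expf_eq0 => /orP [/andP [_ /eqP c0]|/eqP k00].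
    have e1 : e = 1%R by move: c0; rewrite /c; lia.
    by rewrite he e1 zm1; reflexivity.
  case: nJ0; move: hk0; rewrite k00 zm0 => /(em_sym hJi).
  by rewrite /eqmod opp0 add0.
move=> x Jx Ix b Ib.
have [s1 s2] := soc' x b Jx.
split; first done.
split; first by rewrite mul_lam s1; reflexivity.
have [k hk] := gsurj x Jx.
rewrite mul_lam hk (zm_hom _ _ (lamD B b)).
by rewrite (zm_em hJi k (lamg b Ib)); reflexivity.
Qed.

End Main.


Unset Implicit Arguments. Set Strict Implicit.

Theorem theorem3p36 (T : Type) (B : brace T) (I : T -> Prop) :
  supersoluble B -> is_ideal B I -> centrally_nilpotent B I ->
  B_centrally_nilpotent B I.
Proof.
move=> [n [J [J0 [Jn [Jid [Jinc Jstep]]]]]] hI [m hZ].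
exists n, (fun i x => J i x /\ I x).
split.
  move=> x; split; first by case=> /J0.
  by move=> ->; split; [apply/J0 | apply: (id0 hI)].
split; first by move=> x; split; [case | move=> Ix; split].
split; first by move=> i lei; apply: ideal_cap => //; apply: Jid.
split; first by move=> i lti x [Jx Ix]; split => //; apply: Jinc.
move=> i lti x [Jx Ix].
have hJi : is_ideal B (J i) by apply: Jid; apply: ltnW.
have hJn : is_ideal B (J i.+1) by apply: Jid.
apply: (cen_zeta hI hJi Ix).
case: (Jstep i lti) => [[hc hs]|hp].
  exact: (key_inf hJi hJn hZ hc hs Jx Ix).
exact: (key_prime hI hJi hJn hZ hp Jx Ix).
Qed.
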